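(* In the Data Revocation Game: (1) The profile $d_i^*=0$ for all $i\in\mathcal I$ is a Nash equilibrium if and only if $$\epsilon_i\ge\Big(\xi_i\ell_i+\theta_i\sum_{j\in\mathcal I,\,j\ne i}\ell_j^2\Big)^{-1}\quad\text{for all } i\in\mathcal I.$$ (2) The profile $d_i^*=d_i^{\max}$ for all $i\in\mathcal I$ is a Nash equilibrium if and only if $$\epsilon_i\le(\xi_i\ell_i)^{-1}-\sum_{j\in\mathcal I}d_j^{\max}\quad\text{for all } i\in\mathcal I.$$
   Context: Data Revocation Game: a finite set of users $\mathcal I=\{1,\dots,I\}$, $I\ge 2$. Each user $i$ has parameters $d_i^{\max}>0$, $\epsilon_i>0$, $\xi_i>0$, $\ell_i>0$, $\theta_i\ge 0$. Each user chooses $d_i\in[0,d_i^{\max}]$. Payoff $$U_i(d_i,\boldsymbol{d_{-i}})=\ln\Big(\sum_{j\in\mathcal I}d_j+\epsilon_i\Big)-\xi_i d_i\ell_i-\theta_i d_i\sum_{j\neq i}\Big(1-\frac{d_j}{d_j^{\max}}\Big)\ell_j^2 .$$ A Nash equilibrium is a profile $(d_i^* )$ with $d_i^*\in[0,d_i^{\max}]$ and $U_i(d_i^*,\boldsymbol{d_{-i}^*})\ge U_i(d_i,\boldsymbol{d_{-i}^*})$ for all $i$ and all $d_i\in[0,d_i^{\max}]$. *)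

(* Defs.v *)
From HB Require Import structures.
From mathcomp Require Import all_boot all_order all_algebra.
From mathcomp Require Import all_classical all_reals all_analysis.
Set Implicit Arguments. Unset Strict Implicit. Unset Printing Implicit Defensive.
Import Order.TTheory GRing.Theory Num.Theory.
Local Open Scope ring_scope.

Section DRG.
Variables (R : realType) (I : finType).

Definition payoff (dmax eps xi ell theta : I -> R) (d : I -> R) (i : I) : R :=
  ln (\sum_(j : I) d j + eps i) - xi i * d i * ell i
  - theta i * d i * \sum_(j : I | j != i) (1 - d j / dmax j) * ell j ^+ 2.

Definition upd (d : I -> R) (i : I) (x : R) : I -> R :=
  fun j => if j == i then x else d j.

Definition feasible (dmax : I -> R) (d : I -> R) : Prop :=
  forall i, 0 <= d i <= dmax i.

Definition is_NE (dmax eps xi ell theta : I -> R) (d : I -> R) : Prop :=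
  feasible dmax d /\
  forall i (x : R), 0 <= x <= dmax i ->
    payoff dmax eps xi ell theta (upd d i x) i <= payoff dmax eps xi ell theta d i.
End DRG.

(* Main.v *)
Require Import Defs.
From HB Require Import structures.
From mathcomp Require Import all_boot all_order all_algebra.
From mathcomp Require Import all_classical all_reals all_analysis.
From mathcomp Require Import lra.
Import Order.TTheory GRing.Theory Num.Theory.
Local Open Scope ring_scope.

Lemma ln_sub_le (R : realType) (p q : R) : 0 < p -> 0 < q ->
  ln p - ln q <= (p - q) / q.
Proof.
move=> hp hq.
rewrite -ln_div ?posrE //.
have -> : p / q = 1 + (p - q) / q by rewrite mulrBl divff ?gt_eqF //; lra.
apply: le_ln1Dx.
have : 0 < p / q by rewrite divr_gt0.
rewrite mulrBl divff ?gt_eqF //; lra.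
Qed.

Arguments ln_sub_le {R p q}.

Section S.
Variables (R : realType) (I : finType).
Variables (dmax eps xi ell theta : I -> R).

Lemma payoffE (d : I -> R) i :
  payoff dmax eps xi ell theta d i =
  ln (d i + \sum_(j | j != i) d j + eps i) - xi i * d i * ell i
  - theta i * d i * \sum_(j : I | j != i) (1 - d j / dmax j) * ell j ^+ 2.
Proof. by rewrite /payoff (bigD1 i) //=. Qed.

Lemma payoff_updE (d : I -> R) i x :
  payoff dmax eps xi ell theta (upd d i x) i =
  ln (x + \sum_(j | j != i) d j + eps i) - xi i * x * ell i
  - theta i * x * \sum_(j : I | j != i) (1 - d j / dmax j) * ell j ^+ 2.
Proof.
rewrite payoffE.
have -> : \sum_(j | j != i) upd d i x j = \sum_(j | j != i) d j.
  by apply: eq_bigr => j /negbTE hj; rewrite /upd hj.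
have -> : \sum_(j | j != i) (1 - upd d i x j / dmax j) * ell j ^+ 2
    = \sum_(j | j != i) (1 - d j / dmax j) * ell j ^+ 2.
  by apply: eq_bigr => j /negbTE hj; rewrite /upd hj.
by rewrite /upd eqxx.
Qed.
End S.

Theorem proposition2 (R : realType) (I : finType) (hI : (2 <= #|I|)%N)
  (dmax eps xi ell theta : I -> R)
  (hdmax : forall i, 0 < dmax i) (heps : forall i, 0 < eps i)
  (hxi : forall i, 0 < xi i) (hell : forall i, 0 < ell i)
  (htheta : forall i, 0 <= theta i) :
  (is_NE dmax eps xi ell theta (fun _ => 0) <->
     (forall i, eps i >= (xi i * ell i
                          + theta i * \sum_(j : I | j != i) ell j ^+ 2)^-1))
  /\
  (is_NE dmax eps xi ell theta dmax <->
     (forall i, eps i <= (xi i * ell i)^-1 - \sum_(j : I) dmax j)).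
Proof.
have feas0 : feasible dmax (fun _ => 0).
  by move=> i; rewrite lexx /= ltW.
have feasM : feasible dmax dmax.
  by move=> i; rewrite lexx ltW.
split.
- have E0 : forall i x, payoff dmax eps xi ell theta (upd (fun _ => 0) i x) i
      = ln (x + eps i) - (xi i * ell i
          + theta i * \sum_(j : I | j != i) ell j ^+ 2) * x.
    move=> i x; rewrite payoff_updE big1 // addr0.
    rewrite (eq_bigr (fun j => ell j ^+ 2)); last by move=> j _; rewrite mul0r subr0 mul1r.
    by rewrite mulrDl; lra.
  have E00 : forall i, payoff dmax eps xi ell theta (fun _ => 0) i = ln (eps i).
    by move=> i; rewrite payoffE big1 // !mulr0 mul0r !subr0 !add0r mul0r subr0.
  have Sge0 : forall i, 0 <= \sum_(j : I | j != i) ell j ^+ 2.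
    by move=> i; apply: sumr_ge0 => j _; apply: sqr_ge0.
  split.
  + move=> [_ H] i.
    set a := xi i * ell i + theta i * _.
    have ha : 0 < a by rewrite /a; have := mulr_ge0 (htheta i) (Sge0 i);
      have := mulr_gt0 (hxi i) (hell i); lra.
    rewrite leNgt; apply/negP => hlt.
    set x := Num.min (dmax i) ((a^-1 - eps i) / 2).
    have hx0 : 0 < x by rewrite lt_min hdmax /=; lra.
    have hxd : x <= dmax i by rewrite ge_min lexx.
    have hxa : x <= (a^-1 - eps i) / 2 by rewrite ge_min lexx orbT.
    have Hle : ln (x + eps i) - a * x <= ln (eps i).
      by rewrite -E0 -E00; apply: H; rewrite hxd ltW.
    have hxe : 0 < x + eps i by have := heps i; lra.
    have := ln_sub_le (heps i) hxe.
    have -> : (eps i - (x + eps i)) / (x + eps i) = - (x / (x + eps i)).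
      by rewrite -mulNr; congr (_ / _); lra.
    move=> h2.
    have h3 : x / (x + eps i) <= a * x by lra.
    rewrite ler_pdivrMr // in h3.
    have h4 : 1 <= a * (x + eps i).
      by rewrite -(ler_pM2l hx0) mulr1; lra.
    have h5 : x + eps i < a^-1 by lra.
    have : a * (x + eps i) < a * a^-1 by rewrite ltr_pM2l.
    rewrite divff ?gt_eqF //; lra.
  + move=> H; split => // i x /andP [hx0 hxd].
    rewrite E0 E00.
    set a := xi i * ell i + theta i * _.
    have ha : 0 < a by rewrite /a; have := mulr_ge0 (htheta i) (Sge0 i);
      have := mulr_gt0 (hxi i) (hell i); lra.
    have hxe : 0 < x + eps i by have := heps i; lra.
    have := ln_sub_le hxe (heps i).
    have -> : (x + eps i - eps i) = x by lra.
    have h1 : (eps i)^-1 <= a.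
      by rewrite -(invrK a) lef_pV2 ?posrE ?invr_gt0 //; exact: H.
    have : x / eps i <= a * x by rewrite mulrC ler_wpM2r.
    lra.
- have Z : forall i, \sum_(j | j != i) (1 - dmax j / dmax j) * ell j ^+ 2 = 0.
    by move=> i; rewrite big1 // => j _; rewrite divff ?gt_eqF // subrr mul0r.
  have DE : forall i, \sum_j dmax j = dmax i + \sum_(j | j != i) dmax j.
    by move=> i; rewrite (bigD1 i).
  have Si0 : forall i, 0 <= \sum_(j | j != i) dmax j.
    by move=> i; apply: sumr_ge0 => j _; apply: ltW.
  split.
  + move=> [_ H] i.
    have Hi := H i.
    set b := xi i * ell i.
    have hb : 0 < b by rewrite /b mulr_gt0.
    rewrite leNgt; apply/negP => hlt.
    set c := \sum_(j | j != i) dmax j + eps i.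
    have hc : 0 < c by have := Si0 i; have := heps i; rewrite /c; lra.
    have hP : b^-1 < dmax i + c by move: hlt; rewrite (DE i) /c; lra.
    set t := Num.min (dmax i) ((dmax i + c - b^-1) / 2).
    have ht0 : 0 < t by rewrite lt_min hdmax /=; have := hdmax i; lra.
    have htd : t <= dmax i by rewrite ge_min lexx.
    have hta : t <= (dmax i + c - b^-1) / 2 by rewrite ge_min lexx orbT.
    have Hle : ln (dmax i - t + c) - b * (dmax i - t)
        <= ln (dmax i + c) - b * dmax i.
      have := Hi (dmax i - t).
      rewrite payoff_updE payoffE Z !mulr0 !subr0 /c !addrA -/b.
      rewrite ![xi i * _ * ell i]mulrAC -/b; apply; apply/andP; split; lra.
    have hxc : 0 < dmax i - t + c by lra.
    have hPc : 0 < dmax i + c by have := hdmax i; lra.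
    have := ln_sub_le hPc hxc.
    have -> : dmax i + c - (dmax i - t + c) = t by lra.
    move=> h2.
    have h3 : b * t <= t / (dmax i - t + c) by lra.
    rewrite ler_pdivlMr // in h3.
    have h4 : b * (dmax i - t + c) <= 1.
      by rewrite -(ler_pM2l ht0) mulr1; lra.
    have h5 : b^-1 < dmax i - t + c by lra.
    have : b * b^-1 < b * (dmax i - t + c) by rewrite ltr_pM2l.
    rewrite divff ?gt_eqF //; lra.
  + move=> H; split => // i x /andP [hx0 hxd].
    set b := xi i * ell i.
    have hb : 0 < b by rewrite /b mulr_gt0.
    set c := \sum_(j | j != i) dmax j + eps i.
    have hc : 0 < c by have := Si0 i; have := heps i; rewrite /c; lra.
    have hP : dmax i + c <= b^-1 by have := H i; rewrite (DE i) /c -/b; lra.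
    rewrite payoff_updE payoffE Z !mulr0 !subr0 /c ?addrA -/b.
    rewrite ![xi i * _ * ell i]mulrAC -/b.
    have hxc : 0 < x + c by lra.
    have hPc : 0 < dmax i + c by have := hdmax i; lra.
    have := ln_sub_le hxc hPc.
    have -> : x + c - (dmax i + c) = - (dmax i - x) by lra.
    have h1 : b <= (dmax i + c)^-1.
      by rewrite -(invrK b) lef_pV2 ?posrE ?invr_gt0.
    have : (dmax i - x) * b <= (dmax i - x) / (dmax i + c).
      by rewrite ler_wpM2l //; lra.
    rewrite /c !addrA; lra.
Qed.
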